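(* Consider the private counterfactual retrieval problem described in the context, with $N=2$ servers, database size $M$, dimension $d$, attribute bound $R$, and let $q>R^2 d$ be a prime. Then there exists a scheme over $\mathbb{F}_q$ that satisfies decodability (the user recovers exactly the index $\theta^*=\arg\min_{i\in[M]}\|x-y_i\|^2$ of the closest accepted sample) and perfect user privacy, and whose communication cost is $2(d+M)$ symbols of $\mathbb{F}_q$.
   Context: Setting (private counterfactual retrieval, PCR). A database $\mathcal{D}=\{y_1,\dots,y_M\}$ of accepted samples, each $y_i\in[0:R]^d$ (integer attributes between $0$ and $R$), is stored in replicated form on $N$ non-colluding, non-communicating servers. A user holds a (rejected) sample $x\in[0:R]^d$. All integers are viewed as elements of the prime field $\mathbb{F}_q$. The goal is for the user to learn $\theta^*=\arg\min_{i\in[M]}\|x-y_i\|^2$ (squared Euclidean distance computed over the integers). A scheme works as follows: the user, using $x$ and private randomness, sends a query $Q_n$ (a tuple of elements of $\mathbb{F}_q$) to server $n\in[N]$; the servers share common randomness $Z'$ unknown to the user; server $n$ returns an answer $A_n$ that is a deterministic function of $(\mathcal{D},Q_n,Z')$, i.e. $H(A_n\mid \mathcal{D},Q_n,Z')=0$. Decodability: $H(\theta^*\mid Q_{[N]},A_{[N]},x)=0$. Perfect user privacy: for every $n\in[N]$, $I(x,\theta^*;Q_n,A_n\mid \mathcal{D})=0$. The communication cost is the total number of $\mathbb{F}_q$ symbols uploaded in all queries plus downloaded in all answers. *)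

(* Defs.v *)
From HB Require Import structures.
From mathcomp Require Import all_boot all_order all_algebra.
Set Implicit Arguments. Unset Strict Implicit. Unset Printing Implicit Defensive.
Import Order.TTheory GRing.Theory Num.Theory.

Definition sample (d R : nat) := 'I_d -> 'I_R.+1.
Definition database (M d R : nat) := 'I_M -> sample d R.

Definition sqdist d R (x y : sample d R) : nat :=
  (\sum_(j < d) `|(x j : nat) - (y j : nat)| ^ 2)%N.

(* i is theta^* = argmin_i ||x - y_i||^2, ties broken towards the smallest index *)
Definition is_theta_star M d R (D : database M d R) (x : sample d R) (i : 'I_M) : Prop :=
  (forall j : 'I_M, sqdist x (D i) <= sqdist x (D j))%N /\
  (forall j : 'I_M, sqdist x (D j) = sqdist x (D i) -> (i <= j)%N).

(* The user's private randomness is uniform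
   on the nonempty finite type U, the servers' common randomness Z' is uniform on
   the nonempty finite type Z, independent of each other and of (D, x). *)
Record pcr_scheme (q N M d R : nat) := PcrScheme {
  URand : finType;
  ZRand : finType;
  URand_nonempty : (0 < #|URand|)%N;
  ZRand_nonempty : (0 < #|ZRand|)%N;
  qlen : 'I_N -> nat;
  alen : 'I_N -> nat;
  query : forall n : 'I_N, sample d R -> URand -> {ffun 'I_(qlen n) -> 'F_q};
  answer : forall n : 'I_N, database M d R -> {ffun 'I_(qlen n) -> 'F_q} -> ZRand ->
           {ffun 'I_(alen n) -> 'F_q};
  decode : sample d R -> (forall n : 'I_N, {ffun 'I_(qlen n) -> 'F_q}) ->
           (forall n : 'I_N, {ffun 'I_(alen n) -> 'F_q}) -> 'I_M
}.

Arguments query {q N M d R} p n _ _.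
Arguments answer {q N M d R} p n _ _ _.
Arguments decode {q N M d R} p _ _ _.
Arguments qlen {q N M d R} p _.
Arguments alen {q N M d R} p _.
Section SchemeProps.
Variables (q N M d R : nat) (S : pcr_scheme q N M d R).

(* Decodability: H(theta^* | Q_[N], A_[N], x) = 0, i.e. for every database and
   every x, and every realization of the randomness, the decoder applied to
   (x, Q_[N], A_[N]) returns theta^*. *)
Definition decodable : Prop :=
  forall (D : database M d R) (x : sample d R) (u : URand S) (z : ZRand S),
    is_theta_star D x
      (decode S x (fun n => query S n x u) (fun n => answer S n D (query S n x u) z)).

Definition view_prob (n : 'I_N) (D : database M d R) (x : sample d R)
    (a : {ffun 'I_(qlen S n) -> 'F_q}) (b : {ffun 'I_(alen S n) -> 'F_q}) : rat :=
  (#|[set uz : URand S * ZRand S |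
       (query S n x uz.1 == a) && (answer S n D (query S n x uz.1) uz.2 == b)]|%:R
   / (#|URand S| * #|ZRand S|)%:R)%R.

(* Perfect user privacy: I(x, theta^*; Q_n, A_n | D) = 0 for every n, i.e. given D
   the distribution of the view (Q_n, A_n) of server n does not depend on x
   (theta^* being a function of (D, x)). *)
Definition perfectly_private : Prop :=
  forall (n : 'I_N) (D : database M d R) (x x' : sample d R)
         (a : {ffun 'I_(qlen S n) -> 'F_q}) (b : {ffun 'I_(alen S n) -> 'F_q}),
    @view_prob n D x a b = @view_prob n D x' a b.

Definition comm_cost : nat := (\sum_(n < N) (qlen S n + alen S n))%N.

End SchemeProps.

(* Main.v *)
Require Import Defs.
From mathcomp Require Import all_boot all_order all_algebra.
From mathcomp Require Import zify ring.
Import GRing.Theory.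
Set Implicit Arguments. Unset Strict Implicit.

Definition sqn d R (x : sample d R) : nat := (\sum_(j < d) (x j : nat) ^ 2)%N.
Definition crs d R (x y : sample d R) : nat := (\sum_(j < d) (x j : nat) * (y j : nat))%N.

Lemma term_id (a b : nat) : (`|(a%:Z - b%:Z)%R| ^ 2 + 2 * (a * b) = a ^ 2 + b ^ 2)%N.
Proof.
case: (leqP b a) => h.
  rewrite distnEl //. nia.
rewrite distnEr; last exact: ltnW. nia.
Qed.

Lemma sqdistE d R (x y : sample d R) :
  (sqdist x y + 2 * crs x y = sqn x + sqn y)%N.
Proof.
rewrite /sqdist /crs /sqn big_distrr -!big_split /=.
by apply: eq_bigr => j _; rewrite term_id.
Qed.

Lemma sqdist_le d R (x y : sample d R) : (sqdist x y <= R ^ 2 * d)%N.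
Proof.
rewrite /sqdist.
apply: (@leq_trans (\sum_(j < d) R ^ 2)%N).
  apply: leq_sum => j _.
  have hx := ltn_ord (x j); have hy := ltn_ord (y j).
  rewrite leq_exp2r //.
  case: (leqP (y j : nat) (x j)) => h.
    rewrite distnEl //. lia.
  rewrite distnEr; last exact: ltnW. lia.
by rewrite sum_nat_const card_ord mulnC.
Qed.

Section Scheme.
Variables (M d R q : nat) (hM : (0 < M)%N).

Definition xv (x : sample d R) : {ffun 'I_d -> 'F_q} := [ffun j => ((x j : nat)%:R)%R].

Definition qry (n : 'I_2) (x : sample d R) (u : {ffun 'I_d -> 'F_q}) : {ffun 'I_d -> 'F_q} :=
  if n == ord0 then u else [ffun j => (xv x j - u j)%R].

Definition ans (n : 'I_2) (D : database M d R) (Q : {ffun 'I_d -> 'F_q}) (z : unit) :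
  {ffun 'I_M -> 'F_q} :=
  [ffun i => ((if n == ord0 then (sqn (D i))%:R else 0)
              - 2%:R * \sum_(j < d) Q j * ((D i j : nat)%:R))%R].

Definition dec (x : sample d R) (Q : forall n : 'I_2, {ffun 'I_d -> 'F_q})
  (A : forall n : 'I_2, {ffun 'I_M -> 'F_q}) : 'I_M :=
  [arg min_(i < Ordinal hM) (val (A ord0 i + A ord_max i + (sqn x)%:R)%R * M + i)%N].

End Scheme.

Theorem theorem1 (M d R q : nat) (hM : (0 < M)%N) (hq : prime q)
    (hqR : (R ^ 2 * d < q)%N) :
  exists S : pcr_scheme q 2 M d R,
    decodable S /\ perfectly_private S /\ comm_cost S = (2 * (d + M))%N.
Proof.
Local Open Scope ring_scope.
have pU : (0 < #|{ffun 'I_d -> 'F_q}|)%N.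
  by apply/card_gt0P; exists [ffun=> 0%R].
have pZ : (0 < #|{: unit}|)%N by rewrite card_unit.
exists (@PcrScheme q 2 M d R {ffun 'I_d -> 'F_q} unit pU pZ (fun _ => d) (fun _ => M)
          (@qry d R q) (@ans M d R q) (@dec M d R q hM)).
split; last split.
- move=> D x u z /=.
  rewrite /dec.
  have key : forall i : 'I_M,
      val ((ans ord0 D (qry ord0 x u) z i + ans ord_max D (qry ord_max x u) z i
            + (sqn x)%:R)%R : 'F_q) = sqdist x (D i).
    move=> i.
    have -> : ((ans ord0 D (qry ord0 x u) z i + ans ord_max D (qry ord_max x u) z i
            + (sqn x)%:R)%R : 'F_q) = (sqdist x (D i))%:R.
      have E := congr1 (fun k : nat => (k%:R : 'F_q)) (sqdistE x (D i)).
      move: E => /=; rewrite natrD natrM => E.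
      rewrite !ffunE /qry /=.
      have -> : (\sum_(j < d) [ffun j0 => xv q x j0 - u j0] j * (D i j : nat)%:R
                = (crs x (D i))%:R - \sum_(j < d) u j * (D i j : nat)%:R :> 'F_q)%R.
        rewrite /crs natr_sum -sumrB; apply: eq_bigr => j _.
        by rewrite !ffunE natrM mulrBl.
      have -> : (sqdist x (D i))%:R = ((sqn x)%:R + (sqn (D i))%:R - 2%:R * (crs x (D i))%:R :> 'F_q)%R.
        by rewrite -natrD -E addrK.
      ring.
    rewrite -[RHS](@modn_small _ q); last exact: (leq_ltn_trans (sqdist_le _ _) hqR).
    exact: (val_Fp_nat hq).
  case: arg_minnP => // i _ Hi; rewrite key in Hi.
  split.
  + move=> j; have := Hi j isT; rewrite key.
    have := ltn_ord i; have := ltn_ord j. nia.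
  + move=> j Ej; have := Hi j isT; rewrite key Ej.
    have := ltn_ord i; have := ltn_ord j. nia.
- move=> n D x x' a b.
  rewrite /view_prob /=.
  suff H : forall y : sample d R,
      #|[set uz : {ffun 'I_d -> 'F_q} * unit |
         (qry n y uz.1 == a) && (ans n D (qry n y uz.1) uz.2 == b)]| =
      (ans n D a tt == b) :> nat.
    by rewrite !H.
  move=> y.
  pose ua := if n == ord0 then a else [ffun j => (xv q y j - a j)%R].
  have kq : forall u, (qry n y u == a) = (u == ua).
    move=> u; rewrite /qry /ua; case: (n == ord0) => //.
    apply/eqP/eqP => [<-|->]; apply/ffunP => j; rewrite !ffunE; ring.
  have -> : [set uz : {ffun 'I_d -> 'F_q} * unit |
         (qry n y uz.1 == a) && (ans n D (qry n y uz.1) uz.2 == b)] =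
      if ans n D a tt == b then [set (ua, tt)] else set0.
    apply/setP => -[u []]; rewrite !inE /= kq.
    case: eqP => [->|ne].
      have -> : qry n y ua = a by apply/eqP; rewrite kq.
      by case: (ans n D a tt == b); rewrite ?inE ?eqxx.
    case: (ans n D a tt == b); rewrite ?inE //.
    by apply/esym/eqP => -[].
  by case: (ans n D a tt == b); rewrite ?cards1 ?cards0.
- by rewrite /comm_cost big_ord_recr big_ord1 /=; lia.
Qed.
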